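(* Let $\mathcal G=(V_{\min},V_{\max},E,w,\lambda)$ be a discounted payoff game, not all of whose joint strategies are co-optimal, with contraction $\lambda^*$ and gap $\gamma$, and let $0<\varepsilon\le\frac{1-\lambda^*}{3}\gamma$. Let $\mathcal G'=(V_{\min},V_{\max},E,w',\lambda)$ be obtained from $\mathcal G$ by adding to every edge weight a value drawn independently and uniformly at random from $(-\varepsilon,\varepsilon)$. Then every joint strategy that is co-optimal for $\mathcal G'$ is also co-optimal for $\mathcal G$, and $\mathcal G'$ is almost surely sharp.
   Context: A discounted payoff game is a tuple $\mathcal G=(V_{\min},V_{\max},E,w,\lambda)$ with $V=V_{\min}\cup V_{\max}$ finite (disjoint union of Min and Max vertices), $E\subseteq V\times V$ with every vertex having an outgoing edge, $w:E\to\mathbb R$, $\lambda:E\to[0,1)$. The outcome of a play $e_0e_1\ldots$ is $\sum_{i\ge0}w_{e_i}\prod_{j<i}\lambda_{e_j}$. A joint strategy is a map $\sigma:V\to V$ with $(v,\sigma(v))\in E$; $\mathrm{val}(\sigma)(v)$ is the outcome of the play from $v$ following $\sigma$; the game value $\mathrm{val}(\mathcal G)(v)$ is $\sup_{\sigma_{\max}}\inf_{\sigma_{\min}}$ of the outcome from $v$ over positional strategies; $\sigma$ is co-optimal iff $\mathrm{val}(\sigma)=\mathrm{val}(\mathcal G)$. $\mathsf{offset}(x,(v,v'))=x(v)-(w_{(v,v')}+\lambda_{(v,v')}x(v'))$ if $v\in V_{\max}$, and $(w_{(v,v')}+\lambda_{(v,v')}x(v'))-x(v)$ otherwise. Contraction: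 $\lambda^*=\max_e\lambda_e$. For non-co-optimal $\sigma$, $\gamma_\sigma=-\min\{\mathsf{offset}(\mathrm{val}(\sigma),e)\mid e\in E\}$; the gap $\gamma$ is the minimum of $\gamma_\sigma$ over all non-co-optimal joint strategies. $H$ is the system of inequations over $x\in\mathbb R^V$ containing, for each edge $e=(v,v')$, $x(v)\ge w_e+\lambda_e x(v')$ if $v\in V_{\max}$ and $\le$ if $v\in V_{\min}$. A basis of $H$ is a set of $|V|$ inequations whose equality versions have a unique common solution; if it satisfies $H$ it is the basis valuation. The game is sharp if every basis valuation satisfies exactly $|V|$ inequations of $H$ with equality. *)

(* Defs.v *)
From HB Require Import structures.
From mathcomp Require Import all_boot all_order all_algebra.
From mathcomp Require Import all_classical all_reals all_analysis.
Set Implicit Arguments. Unset Strict Implicit. Unset Printing Implicit Defensive.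
Import Order.TTheory GRing.Theory Num.Theory numFieldNormedType.Exports.
Local Open Scope classical_set_scope.
Local Open Scope ring_scope.

(* A discounted payoff game is given by a finite vertex type V, the set of
   Max vertices Vmax (Min vertices are the complement ~: Vmax), an edge set
   E : {set V * V}, weights w and discounts lam (only their values on E matter). *)

Definition valid_game {R : realType} {V : finType} (E : {set V * V})
  (lam : V * V -> R) : Prop :=
  (forall v, exists v', (v, v') \in E) /\
  (forall e, e \in E -> 0 <= lam e /\ lam e < 1).

Definition joint_strategy {V : finType} (E : {set V * V}) (s : V -> V) : Prop :=
  forall v, (v, s v) \in E.

Definition play {V : finType} (s : V -> V) (v : V) (i : nat) : V := iter i s v.

Definition outcome_term {R : realType} {V : finType} (w lam : V * V -> R)
  (s : V -> V) (v : V) (i : nat) : R :=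
  w (play s v i, play s v i.+1) *
  \prod_(j < i) lam (play s v j, play s v j.+1).

Definition val_strat {R : realType} {V : finType} (w lam : V * V -> R)
  (s : V -> V) (v : V) : R :=
  limn (series (outcome_term w lam s v)).

Definition mix {V : finType} (Vmax : {set V}) (s t : V -> V) (v : V) : V :=
  if v \in Vmax then s v else t v.

(* game value: sup over Max positional strategies of inf over Min positional
   strategies (positional strategies of a player = restrictions of joint ones) *)
Definition val_game {R : realType} {V : finType} (Vmax : {set V})
  (E : {set V * V}) (w lam : V * V -> R) (v : V) : R :=
  sup [set inf [set val_strat w lam (mix Vmax s t) v | t in joint_strategy E]
       | s in joint_strategy E].

Definition co_optimal {R : realType} {V : finType} (Vmax : {set V})
  (E : {set V * V}) (w lam : V * V -> R) (s : V -> V) : Prop :=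
  joint_strategy E s /\
  forall v, val_strat w lam s v = val_game Vmax E w lam v.

Definition offset {R : realType} {V : finType} (Vmax : {set V})
  (w lam : V * V -> R) (x : V -> R) (e : V * V) : R :=
  if e.1 \in Vmax then x e.1 - (w e + lam e * x e.2)
  else (w e + lam e * x e.2) - x e.1.

Definition lambda_star {R : realType} {V : finType} (E : {set V * V})
  (lam : V * V -> R) : R :=
  sup [set lam e | e in [set e | e \in E]].

Definition gamma_strat {R : realType} {V : finType} (Vmax : {set V})
  (E : {set V * V}) (w lam : V * V -> R) (s : V -> V) : R :=
  - inf [set offset Vmax w lam (val_strat w lam s) e | e in [set e | e \in E]].

Definition gap {R : realType} {V : finType} (Vmax : {set V})
  (E : {set V * V}) (w lam : V * V -> R) : R :=
  inf [set gamma_strat Vmax E w lam s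
       | s in [set s | joint_strategy E s /\ ~ co_optimal Vmax E w lam s]].

Definition satisfies_H {R : realType} {V : finType} (Vmax : {set V})
  (E : {set V * V}) (w lam : V * V -> R) (x : V -> R) : Prop :=
  forall e, e \in E ->
    if e.1 \in Vmax then w e + lam e * x e.2 <= x e.1
    else x e.1 <= w e + lam e * x e.2.

Definition solves_eqs {R : realType} {V : finType}
  (w lam : V * V -> R) (B : {set V * V}) (x : V -> R) : Prop :=
  forall e, e \in B -> x e.1 = w e + lam e * x e.2.

Definition is_basis {R : realType} {V : finType} (E : {set V * V})
  (w lam : V * V -> R) (B : {set V * V}) : Prop :=
  B \subset E /\ #|B| = #|V| /\
  (exists x, solves_eqs w lam B x) /\
  (forall x y, solves_eqs w lam B x -> solves_eqs w lam B y -> x =1 y).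

Definition basis_valuation {R : realType} {V : finType} (Vmax : {set V})
  (E : {set V * V}) (w lam : V * V -> R) (x : V -> R) : Prop :=
  exists B, is_basis E w lam B /\ solves_eqs w lam B x /\
            satisfies_H Vmax E w lam x.

Definition sharp {R : realType} {V : finType} (Vmax : {set V})
  (E : {set V * V}) (w lam : V * V -> R) : Prop :=
  forall x, basis_valuation Vmax E w lam x ->
    #|[set e in E | x e.1 == w e + lam e * x e.2]| = #|V|.

Definition uniform_sym {R : realType} {d : measure_display}
  {Omega : measurableType d} (P : probability Omega R) (X : Omega -> R)
  (a : R) : Prop :=
  let I : set R := [set x | - a < x < a] in
  forall B : set R, measurable B ->
    P (X @^-1` B) =
    (lebesgue_measure (B `&` I) * ((2 * a)^-1)%:E)%E.

Definition mutually_independent {R : realType} {d : measure_display}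
  {Omega : measurableType d} (P : probability Omega R) {I : finType}
  (A : {set I}) (X : I -> Omega -> R) : Prop :=
  forall B : I -> set R, (forall i, measurable (B i)) ->
    P (\bigcap_(i in [set i | i \in A]) (X i @^-1` B i)) =
    (\prod_(i in A) P (X i @^-1` B i))%E.

(* Main.v *)
Require Import Defs.
From HB Require Import structures.
From mathcomp Require Import all_boot all_order all_algebra.
From mathcomp Require Import all_classical all_reals all_analysis.
From mathcomp Require Import ring lra.
Import Order.TTheory GRing.Theory Num.Theory numFieldNormedType.Exports.
Local Open Scope classical_set_scope.
Local Open Scope ring_scope.
Section Game.
Variables (R : realType) (V : finType).
Implicit Types (w lam : V * V -> R) (s t : V -> V).

Lemma play_S s v i : play s v i.+1 = play s (s v) i.
Proof. by rewrite /play iterSr. Qed.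

Lemma play_S' s v i : play s v i.+1 = s (play s v i).
Proof. by rewrite /play iterS. Qed.

Lemma play_sv s v i : s (play s v i) = play s (s v) i.
Proof. by rewrite -play_S' play_S. Qed.

Lemma term_S w lam s v i : outcome_term w lam s v i.+1 =
  lam (v, s v) * outcome_term w lam s (s v) i.
Proof.
rewrite /outcome_term big_ord_recl.
rewrite (eq_bigr (fun j : 'I_i => lam (play s (s v) j, play s (s v) j.+1))); last first.
  move=> j _; rewrite /= /bump /=. rewrite add0n. by rewrite !play_sv.
rewrite (play_S s v i) (play_S s v i.+1) /=.
by rewrite mulrCA.
Qed.

Lemma term_0 w lam s v : outcome_term w lam s v 0 = w (v, s v).
Proof. by rewrite /outcome_term big_ord0 mulr1. Qed.

Lemma term_cvg w lam s L : (forall u, 0 <= lam (u, s u) <= L) -> L < 1 ->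
  forall v, cvgn (series (outcome_term w lam s v)).
Proof.
move=> hl hL v; apply: normed_cvg.
have L0 : 0 <= L by case/andP: (hl v) => h1 h2; exact: le_trans h2.
set M := \sum_u `|w (u, s u)|.
apply: (@series_le_cvg _ _ (geometric M L)).
- by move=> n /=.
- by move=> n; rewrite /geometric /= mulr_ge0 ?sumr_ge0 ?exprn_ge0.
- move=> n /=; rewrite /outcome_term normrM /geometric /=.
  apply: ler_pM => //.
  + by rewrite /M (bigD1 (play s v n)) //= lerDl sumr_ge0.
  + have -> : L ^+ n = \prod_(i < n) L by rewrite prodr_const card_ord.
    rewrite normr_prod; apply: ler_prod => j _.
    by rewrite normr_ge0 /=; have /andP[h1 h2] := hl (play s v j); rewrite ger0_norm.
- apply: is_cvg_geometric_series; by rewrite ger0_norm.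
Qed.

Lemma val_strat_eq w lam s L : (forall u, 0 <= lam (u, s u) <= L) -> L < 1 ->
  forall v, val_strat w lam s v = w (v, s v) + lam (v, s v) * val_strat w lam s (s v).
Proof.
move=> hl hL v; rewrite /val_strat.
have hc := @term_cvg w lam s L hl hL (s v).
apply: cvg_lim => //; rewrite -cvg_shiftS /=.
have -> : (fun n => series (outcome_term w lam s v) n.+1) =
   (fun n => w (v, s v) + lam (v, s v) * series (outcome_term w lam s (s v)) n).
  apply: funext => n; rewrite /series /= big_nat_recl // term_0; congr (_ + _).
  by rewrite mulr_sumr; apply: eq_bigr => i _; rewrite term_S.
apply: cvgD; first exact: cvg_cst.
by apply: cvgMl_tmp.
Qed.

Lemma ex_argmax (I : finType) (P : pred I) (F : I -> R) i0 : P i0 ->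
  exists2 m, P m & forall i, P i -> F i <= F m.
Proof. by move=> Pi0; case: (arg_maxP F Pi0) => m Pm H; exists m. Qed.

Lemma ex_argmin (I : finType) (P : pred I) (F : I -> R) i0 : P i0 ->
  exists2 m, P m & forall i, P i -> F m <= F i.
Proof. by move=> Pi0; case: (arg_minP F Pi0) => m Pm H; exists m. Qed.

Lemma sup_max (A : set R) a : A a -> ubound A a -> sup A = a.
Proof.
move=> Aa ub; apply/le_anti/andP; split; first by apply: ge_sup => //; exists a.
by apply: ub_le_sup => //; exists a.
Qed.

Lemma inf_min (A : set R) a : A a -> lbound A a -> inf A = a.
Proof.
move=> Aa lb; apply/le_anti/andP; split; first by apply: ge_inf => //; exists a.
by apply: lb_le_inf => //; exists a.
Qed.

Lemma cmp_lemma (d : V -> R) (nx : V -> V) (l : V -> R) (c L : R) :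
  (forall u, 0 <= l u <= L) -> L < 1 -> 0 <= c ->
  (forall u, d u <= c + l u * d (nx u)) -> forall u, (1 - L) * d u <= c.
Proof.
move=> hl hL hc hd u.
have [m _ hm] := @ex_argmax V predT d u erefl.
have hum := hm u erefl.
have hL0 : 0 <= 1 - L by rewrite subr_ge0 ltW.
apply: le_trans (_ : (1 - L) * d m <= c); first by rewrite ler_wpM2l.
have [dm0|dm0] := lerP (d m) 0.
  by apply: le_trans hc; rewrite mulr_ge0_le0.
have := hd m; have := hm (nx m) erefl; have /andP[h1 h2] := hl m.
move=> hn hdm.
have : l m * d (nx m) <= L * d m.
  apply: le_trans (_ : l m * d m <= _); first by rewrite ler_wpM2l.
  by rewrite ler_wpM2r // ltW.
move=> h; rewrite mulrBl mul1r; lra.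
Qed.
End Game.
Set Implicit Arguments. Unset Strict Implicit.

Section GameTheory.
Variables (R : realType) (V : finType) (Vmax : {set V}) (E : {set V * V})
  (W lam : V * V -> R) (L : R).
Hypothesis hE : forall v, exists v', (v, v') \in E.
Hypothesis hlam : forall e, e \in E -> 0 <= lam e <= L.
Hypothesis hL : L < 1.

Local Notation joint := (joint_strategy E).
Local Notation val := (val_strat W lam).

Lemma veq s : joint s -> forall v, val s v = W (v, s v) + lam (v, s v) * val s (s v).
Proof. by move=> js; apply: (@val_strat_eq _ _ W lam s L) => // u; apply: hlam. Qed.

Lemma val_le m y : joint m ->
  (forall x, W (x, m x) + lam (x, m x) * y (m x) <= y x) -> forall x, val m x <= y x.
Proof.
move=> jm hy x.
have := @cmp_lemma R V (fun x => val m x - y x) m (fun x => lam (x, m x)) 0 L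
  (fun u => @hlam (u, m u) (jm u)) hL (lexx 0).
move=> /(_ _ x) H.
have : (1 - L) * (val m x - y x) <= 0.
  apply: H => u; rewrite add0r (veq jm u); have := hy u.
  have /andP[h1 _] := @hlam (u, m u) (jm u); nra.
have : 0 < 1 - L by rewrite subr_gt0.
nra.
Qed.

Lemma val_ge m y : joint m ->
  (forall x, y x <= W (x, m x) + lam (x, m x) * y (m x)) -> forall x, y x <= val m x.
Proof.
move=> jm hy x.
have := @cmp_lemma R V (fun x => y x - val m x) m (fun x => lam (x, m x)) 0 L
  (fun u => @hlam (u, m u) (jm u)) hL (lexx 0).
move=> /(_ _ x) H.
have : (1 - L) * (y x - val m x) <= 0.
  apply: H => u; rewrite add0r (veq jm u); have := hy u.
  have /andP[h1 _] := @hlam (u, m u) (jm u); nra.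
have : 0 < 1 - L by rewrite subr_gt0.
nra.
Qed.

Lemma val_lt m y u : joint m ->
  (forall x, W (x, m x) + lam (x, m x) * y (m x) <= y x) ->
  W (u, m u) + lam (u, m u) * y (m u) < y u -> val m u < y u.
Proof.
move=> jm hy hu; have := val_le jm hy (m u); rewrite (veq jm u).
have /andP[h1 _] := @hlam (u, m u) (jm u); nra.
Qed.

Lemma val_gt m y u : joint m ->
  (forall x, y x <= W (x, m x) + lam (x, m x) * y (m x)) ->
  y u < W (u, m u) + lam (u, m u) * y (m u) -> y u < val m u.
Proof.
move=> jm hy hu; have := val_ge jm hy (m u); rewrite (veq jm u).
have /andP[h1 _] := @hlam (u, m u) (jm u); nra.
Qed.

Definition jointb (t : {ffun V -> V}) : bool := [forall v, (v, t v) \in E].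

Lemma jointbP (t : {ffun V -> V}) : reflect (joint t) (jointb t).
Proof. by apply: (iffP forallP). Qed.

Definition t0 : {ffun V -> V} := [ffun v => xchoose (hE v)].

Lemma jt0 : jointb t0.
Proof. by apply/jointbP => v; rewrite ffunE; exact: (xchooseP (hE v)). Qed.

Lemma joint_mix s t : joint s -> joint t -> joint (mix Vmax s t).
Proof. by move=> js jt v; rewrite /mix; case: ifP. Qed.

Definition br (s : V -> V) : {ffun V -> V} :=
  [arg min_(t < t0 | jointb t) \sum_v val (mix Vmax s t) v]%O.

Lemma br_spec s : jointb (br s) /\
  forall t, jointb t -> \sum_v val (mix Vmax s (br s)) v <= \sum_v val (mix Vmax s t) v.
Proof.
rewrite /br; case: arg_minP; first exact: jt0.
by move=> m jm H; split.
Qed.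

Lemma sum_lt (f g : V -> R) u : (forall x, f x <= g x) -> f u < g u ->
  \sum_x f x < \sum_x g x.
Proof.
move=> hle hlt; rewrite (bigD1 u) //= [X in _ < X](bigD1 u) //=.
by apply: ltr_leD => //; apply: ler_sum => i _.
Qed.

Lemma br1 s u u' : joint s -> u \notin Vmax -> (u, u') \in E ->
  val (mix Vmax s (br s)) u <= W (u, u') + lam (u, u') * val (mix Vmax s (br s)) u'.
Proof.
move=> js uN e; have [/jointbP jb hmin] := br_spec s.
set z := val (mix Vmax s (br s)).
rewrite leNgt; apply/negP => hlt.
pose t' : {ffun V -> V} := [ffun x => if x == u then u' else br s x].
have jt' : jointb t'.
  apply/jointbP => x; rewrite ffunE; case: eqP => [->|_] //.
have jm : joint (mix Vmax s t') by apply: joint_mix => //; exact/jointbP.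
have jm0 : joint (mix Vmax s (br s)) by apply: joint_mix.
have hy : forall x, W (x, mix Vmax s t' x) + lam (x, mix Vmax s t' x) * z (mix Vmax s t' x) <= z x.
  move=> x; case: (eqVneq x u) => [->|xu].
    by rewrite /mix ffunE (negbTE uN) eqxx; exact: ltW.
  rewrite /z [X in _ <= X](veq jm0 x).
  by rewrite /mix ffunE (negbTE xu); case: ifP.
have hu : W (u, mix Vmax s t' u) + lam (u, mix Vmax s t' u) * z (mix Vmax s t' u) < z u.
  by rewrite /mix ffunE (negbTE uN) eqxx.
have := hmin t' jt'.
have := sum_lt (fun x => val_le jm hy x) (val_lt jm hy hu).
rewrite -/z; move=> h1 h2; have := lt_le_trans h1 h2; by rewrite ltxx.
Qed.

Lemma br2 s t : joint s -> joint t -> forall x,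
  val (mix Vmax s (br s)) x <= val (mix Vmax s t) x.
Proof.
move=> js jt; have [/jointbP jb _] := br_spec s.
have jm0 : joint (mix Vmax s (br s)) by apply: joint_mix.
apply: val_ge; first exact: joint_mix.
move=> x; case xV: (x \in Vmax).
  by rewrite (veq jm0 x) /mix xV.
by rewrite /mix xV; apply: br1 => //; rewrite xV.
Qed.

Definition sstar : {ffun V -> V} :=
  [arg max_(s > t0 | jointb s) \sum_v val (mix Vmax s (br s)) v]%O.

Lemma sstar_spec : jointb sstar /\
  forall s, jointb s -> \sum_v val (mix Vmax s (br s)) v <= \sum_v val (mix Vmax sstar (br sstar)) v.
Proof.
rewrite /sstar; case: arg_maxP; first exact: jt0.
by move=> m jm H; split.
Qed.

Definition xs := val (mix Vmax sstar (br sstar)).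

Lemma opt1 u u' : u \in Vmax -> (u, u') \in E ->
  W (u, u') + lam (u, u') * xs u' <= xs u.
Proof.
move=> uV e; have [/jointbP js hmax] := sstar_spec.
rewrite leNgt; apply/negP => hlt.
pose s' : {ffun V -> V} := [ffun x => if x == u then u' else sstar x].
have js' : jointb s'.
  apply/jointbP => x; rewrite ffunE; case: eqP => [->|_] //.
have [/jointbP jb' _] := br_spec s'.
have [/jointbP jb _] := br_spec sstar.
have jm : joint (mix Vmax s' (br s')) by apply: joint_mix => //; exact/jointbP.
have jm0 : joint (mix Vmax sstar (br sstar)) by apply: joint_mix.
have hy : forall x, xs x <= W (x, mix Vmax s' (br s') x) +
     lam (x, mix Vmax s' (br s') x) * xs (mix Vmax s' (br s') x).
  move=> x; rewrite /mix ffunE; case: ifP => xV.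
    case: (eqVneq x u) => [->|xu]; first exact: ltW.
    by rewrite /xs (veq jm0 x) /mix xV.
  by apply: br1 => //; rewrite ?xV.
have hu : xs u < W (u, mix Vmax s' (br s') u) +
     lam (u, mix Vmax s' (br s') u) * xs (mix Vmax s' (br s') u).
  by rewrite /mix ffunE uV eqxx.
have := hmax s' js'.
have := sum_lt (fun x => val_ge jm hy x) (val_gt jm hy hu).
rewrite -/xs; move=> h1 h2; have := lt_le_trans h1 h2; by rewrite ltxx.
Qed.

Lemma opt2 u u' : u \notin Vmax -> (u, u') \in E ->
  xs u <= W (u, u') + lam (u, u') * xs u'.
Proof.
move=> uN e; have [/jointbP js _] := sstar_spec; exact: br1.
Qed.

Lemma game_value v : val_game Vmax E W lam v = xs v.
Proof.
have [/jointbP js _] := sstar_spec.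
have [/jointbP jb _] := br_spec sstar.
have inner : forall s, joint s ->
  inf [set val (mix Vmax s t) v | t in joint] = val (mix Vmax s (br s)) v.
  move=> s js0; have [/jointbP jbs _] := br_spec s.
  apply: (@inf_min R).
    exists (br s : V -> V); [exact: jbs | reflexivity].
  move=> _ [t jt <-]; exact: (br2 js0 jt v).
rewrite /val_game; apply: (@sup_max R).
  exists (sstar : V -> V); first exact: js.
  exact: (inner _ js).
move=> _ [s js0 <-]; rewrite (inner _ js0).
apply: le_trans (br2 js0 jb v) _.
have jm : joint (mix Vmax s (br sstar)) by apply: joint_mix.
have jm0 : joint (mix Vmax sstar (br sstar)) by apply: joint_mix.
apply: (val_le jm) => x; rewrite /mix; case: ifP => xV.
  exact: (opt1 xV (js0 x)).
by rewrite /xs (veq jm0 x) /mix xV.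
Qed.

Lemma coopt_offset s : co_optimal Vmax E W lam s ->
  forall e, e \in E -> 0 <= offset Vmax W lam (val s) e.
Proof.
move=> [js hs] [a b] e; rewrite /offset /= !hs !game_value.
case: ifP => aV.
  by rewrite subr_ge0; apply: opt1.
by rewrite subr_ge0; apply: opt2 => //; rewrite aV.
Qed.

End GameTheory.

Section Part1.
Variables (R : realType) (V : finType) (Vmax : {set V}) (E : {set V * V})
  (w lam : V * V -> R).

Lemma lambda_star_spec (e0 : V * V) : e0 \in E ->
  (forall e, e \in E -> 0 <= lam e < 1) ->
  lambda_star E lam < 1 /\ forall e, e \in E -> 0 <= lam e <= lambda_star E lam.
Proof.
move=> he0 hl.
have [m mE hm] := @ex_argmax R _ (fun e => e \in E) lam e0 he0.
have -> : lambda_star E lam = lam m.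
  apply: sup_max; first by exists m.
  by move=> _ [e eE <-]; apply: hm.
split; first by have /andP[] := hl m mE.
by move=> e eE; have /andP[h1 _] := hl e eE; rewrite h1 hm.
Qed.

Lemma gamma_spec L t : (forall e, e \in E -> 0 <= lam e <= L) -> L < 1 ->
  joint_strategy E t -> forall v0 : V,
  exists2 e0, e0 \in E &
    gamma_strat Vmax E w lam t = - offset Vmax w lam (val_strat w lam t) e0 /\
    (forall e, e \in E -> offset Vmax w lam (val_strat w lam t) e0 <=
                          offset Vmax w lam (val_strat w lam t) e) /\
    0 <= gamma_strat Vmax E w lam t.
Proof.
move=> hlam hL jt v0.
set O := offset Vmax w lam (val_strat w lam t).
have [m mE hm] := @ex_argmin R _ (fun e => e \in E) O (v0, t v0) (jt v0).
have hinf : gamma_strat Vmax E w lam t = - O m.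
  rewrite /gamma_strat; congr (- _); apply: inf_min; first by exists m.
  by move=> _ [e eE <-]; apply: hm.
exists m => //; split => //; split => //.
rewrite hinf oppr_ge0.
apply: le_trans (hm _ (jt v0)) _.
have := @veq R V E w lam L hlam hL t jt v0.
by rewrite /O /offset /=; case: ifP => _ ->; rewrite ?subrr ?subrr.
Qed.

End Part1.

Lemma part1 (R : realType) (V : finType) (Vmax : {set V})
  (Ed : {set V * V}) (w lam : V * V -> R) (eps : R) :
  valid_game Ed lam ->
  (exists s, joint_strategy Ed s /\ ~ co_optimal Vmax Ed w lam s) ->
  0 < eps ->
  eps <= (1 - lambda_star Ed lam) / 3 * gap Vmax Ed w lam ->
  (forall delta : V * V -> R,
     (forall e, e \in Ed -> - eps < delta e < eps) ->
     forall s, co_optimal Vmax Ed (fun e => w e + delta e) lam s ->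
               co_optimal Vmax Ed w lam s).
Proof.
move=> [hE hl] [s0 [js0 nc0]] eps0 heps delta hdelta s cs.
have [v0 _] : exists v0 : V, true.
  case: (pickP (@predT V)) => [v0 _|none]; first by exists v0.
  by exfalso; apply: nc0; split => // v; have := none v.
have hl' : forall e, e \in Ed -> 0 <= lam e < 1.
  by move=> e eE; have [h1 h2] := hl e eE; rewrite h1 h2.
have [hL hlam] := lambda_star_spec (js0 v0) hl'.
set L := lambda_star Ed lam in hL hlam heps.
have [//|nc] := pselect (co_optimal Vmax Ed w lam s).
exfalso.
have js : joint_strategy Ed s by case: cs.
have [e0 e0E [hg0 [hmin hg0pos]]] := gamma_spec Vmax w hlam hL js v0.
have gaple : gap Vmax Ed w lam <= gamma_strat Vmax Ed w lam s.
  rewrite /gap; apply: ge_inf.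
    exists 0 => _ [t [jt _] <-].
    by have [e1 _ [_ [_ h]]] := gamma_spec Vmax w hlam hL jt v0.
  by exists s.
set W' := fun e => w e + delta e.
have hoff := coopt_offset hE hlam hL cs e0E.
set y := val_strat w lam s in hg0 hmin.
set y' := val_strat W' lam s in hoff.
have hd : forall x, (1 - L) * (y' x - y x) <= eps /\ (1 - L) * (y x - y' x) <= eps.
  move=> x; split.
    apply: (@cmp_lemma R V (fun x => y' x - y x) s (fun x => lam (x, s x)) eps L) => //.
    - by move=> u; apply: hlam.
    - exact: ltW.
    move=> u; rewrite /y /y' (@veq R V Ed w lam L hlam hL s js u) (@veq R V Ed W' lam L hlam hL s js u) /W'.
    have /andP[_ h] := hdelta _ (js u); lra.
  apply: (@cmp_lemma R V (fun x => y x - y' x) s (fun x => lam (x, s x)) eps L) => //.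
  - by move=> u; apply: hlam.
  - exact: ltW.
  move=> u; rewrite /y /y' (@veq R V Ed w lam L hlam hL s js u) (@veq R V Ed W' lam L hlam hL s js u) /W'.
  have /andP[h _] := hdelta _ (js u); lra.
move: e0 e0E hg0 hmin hoff => [a b] e0E hg0 hmin hoff.
have [hd1 hd2] := hd a; have [hd3 hd4] := hd b.
have /andP[hla1 hla2] := hlam _ e0E.
have /andP[hdl hdu] := hdelta _ e0E.
have hA : 0 < 1 - L by rewrite subr_gt0.
have hgap : 0 < gap Vmax Ed w lam.
  have : 0 < (1 - L) / 3 * gap Vmax Ed w lam by apply: lt_le_trans heps.
  rewrite pmulr_rgt0 //; apply: divr_gt0 => //.
have hb1 : (1 - L) * (lam (a, b) * (y' b - y b)) <= L * eps.
  rewrite mulrCA; apply: le_trans (_ : lam (a, b) * eps <= _).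
    by apply: ler_wpM2l.
  by apply: ler_wpM2r => //; apply: ltW.
have hb2 : (1 - L) * (lam (a, b) * (y b - y' b)) <= L * eps.
  rewrite mulrCA; apply: le_trans (_ : lam (a, b) * eps <= _).
    by apply: ler_wpM2l.
  by apply: ler_wpM2r => //; apply: ltW.
move: hoff hg0 heps; rewrite /offset /W' /=.
set G := gap Vmax Ed w lam in gaple hgap *.
set g := gamma_strat Vmax Ed w lam s in gaple *.
case: ifP => aV hoff hg0 heps.
- have : (1 - L) * (y' a - (w (a, b) + delta (a, b) + lam (a, b) * y' b)) < 0.
    nra.
  by rewrite ltNge mulr_ge0 // ltW.
- have : (1 - L) * (w (a, b) + delta (a, b) + lam (a, b) * y' b - y' a) < 0.
    nra.
  by rewrite ltNge mulr_ge0 // ltW.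
Qed.
Section LinAlg.
Variables (R : fieldType) (V : finType) (lam : V * V -> R).

Definition psi (b : V * V) (x : V -> R) : R := x b.1 - lam b * x b.2.
Definition coef (b : V * V) (v : V) : R := (v == b.1)%:R - lam b * (v == b.2)%:R.

Lemma sum_ind (a : V) (f : V -> R) : \sum_v (v == a)%:R * f v = f a.
Proof.
rewrite (bigD1 a) //= eqxx mul1r big1 ?addr0 // => v /negbTE ->; by rewrite mul0r.
Qed.

Lemma sum_coef b (x : V -> R) : \sum_v coef b v * x v = psi b x.
Proof.
rewrite /coef /psi.
under eq_bigr do rewrite mulrBl -mulrA.
by rewrite sumrB sum_ind -mulr_sumr sum_ind.
Qed.

Lemma sum_enumV (F : V -> R) : \sum_(j < #|V|) F (enum_val j) = \sum_v F v.
Proof. by rewrite -(big_enum_val (A := predT)). Qed.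

Lemma lin_factor (B : {set V * V}) (e : V * V) :
  (forall k : V -> R, (forall b, b \in B -> psi b k = 0) -> forall v, k v = 0) ->
  exists c : V * V -> R, forall x, psi e x = \sum_(b in B) c b * psi b x.
Proof.
move=> KT.
pose A : 'M[R]_(#|B|, #|V|) := \matrix_(i, j) coef (enum_val i) (enum_val j).
have Ax : forall (x : V -> R) i,
    (A *m (\col_j x (enum_val j))) i 0 = psi (enum_val i) x.
  move=> x i; rewrite !mxE -sum_coef -sum_enumV.
  by apply: eq_bigr => j _; rewrite !mxE.
have K0 : kermx A^T = 0.
  apply/row_matrixP => i; rewrite row0.
  pose r := row i (kermx A^T).
  apply/rowP => j; rewrite [RHS]mxE.
  have hr : r *m A^T = 0 by rewrite /r -row_mul mulmx_ker row0.
  pose x := fun v => r 0 (enum_rank v).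
  have hx : forall b, b \in B -> psi b x = 0.
    move=> b bB.
    have <- := enum_rankK_in bB bB.
    rewrite -Ax.
    have -> : \col_j x (enum_val j) = r^T.
      by apply/matrixP => a c; rewrite [LHS]mxE [RHS]mxE /x enum_valK (ord1 c).
    have -> : A *m r^T = (r *m A^T)^T by rewrite trmx_mul trmxK.
    by rewrite hr trmx0 mxE.
  have := KT x hx (enum_val j).
  by rewrite /x enum_valK.
have fullA : row_full A.
  rewrite /row_full -mxrank_tr.
  have : row_free A^T by rewrite -kermx_eq0 K0.
  by rewrite /row_free.
pose f : 'rV[R]_#|V| := \row_j coef e (enum_val j).
have /submxP [D hD] : (f <= A)%MS by apply: submx_full.
exists (fun b => \sum_(i < #|B|) (enum_val i == b)%:R * D 0 i) => x.
have : (f *m \col_j x (enum_val j)) 0 0 = psi e x.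
  rewrite mxE -sum_coef -sum_enumV; apply: eq_bigr => j _; by rewrite !mxE.
rewrite hD -mulmxA mxE => <-.
under [RHS]eq_bigr do rewrite mulr_suml.
rewrite exchange_big /=; apply: eq_bigr => i _.
rewrite Ax (bigD1 (enum_val i)) ?enum_valP //= eqxx mul1r big1 ?addr0 //.
by move=> b /andP[_ /negbTE]; rewrite eq_sym => ->; rewrite !mul0r.
Qed.
End LinAlg.

Section Prob.
Context (R : realType) (d : measure_display) (Omega : measurableType d)
  (P : probability Omega R).

Lemma P_bigU (I : finType) (Pr : pred I) (F : I -> set Omega) :
  (forall i, measurable (F i)) ->
  measurable (\big[setU/set0]_(i | Pr i) F i) /\
  (P (\big[setU/set0]_(i | Pr i) F i) <= \sum_(i | Pr i) P (F i))%E.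
Proof.
move=> mF.
apply: (big_ind2 (fun A r => measurable A /\ (P A <= r)%E)).
- by split => //; rewrite measure0.
- move=> A r B r' [mA hA] [mB hB]; split; first exact: measurableU.
  apply: le_trans (measureU2 P mA mB) _; exact: leeD.
- by move=> i _; split.
Qed.

Lemma mem_bigU (I : finType) (Pr : pred I) (F : I -> set Omega) i w :
  Pr i -> F i w -> (\big[setU/set0]_(i | Pr i) F i) w.
Proof. by move=> Pi Fw; rewrite (bigD1 i) //=; left. Qed.

Lemma P_fin (A : set Omega) : measurable A -> P A = (fine (P A))%:E.
Proof.
move=> mA; rewrite fineK // ge0_fin_numE ?measure_ge0 //.
by apply: le_lt_trans (probability_le1 P mA) _; rewrite ltey.
Qed.

Lemma P_fin_le (A : set Omega) : measurable A -> 0 <= fine (P A) <= 1.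
Proof.
move=> mA; have h := @P_fin A mA.
by rewrite -!lee_fin -h measure_ge0 probability_le1.
Qed.

Variable (eps : R) (eps0 : 0 < eps).

Definition Ieps : set R := [set x | - eps < x < eps].

Lemma Ieps_itv : Ieps = [set` `]-eps, eps[].
Proof. by apply/seteqP; split => x /=; rewrite in_itv /=. Qed.

Lemma mIeps : measurable Ieps.
Proof. by rewrite Ieps_itv; exact: measurable_itv. Qed.

Lemma unif_bound (Y : Omega -> R) a b : uniform_sym P Y eps -> a <= b ->
  (P (Y @^-1` [set` `[a, b]]) <= ((b - a) / (2 * eps))%:E)%E.
Proof.
move=> hu ab; rewrite hu; last exact: measurable_itv.
apply: le_trans (_ : (lebesgue_measure [set` `[a, b]] * ((2 * eps)^-1)%:E <= _)%E).
  apply: lee_wpmul2r; first by rewrite lee_fin invr_ge0 mulr_ge0 // ltW.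
  apply: le_measure; rewrite ?inE; [|exact: measurable_itv|by move=> x []].
  apply: measurableI; [exact: measurable_itv|].
  by rewrite -/(Ieps); exact: mIeps.
rewrite lebesgue_measure_itv /= lte_fin.
case: ifP => _; first by rewrite -EFinM lee_fin.
by rewrite mul0e lee_fin divr_ge0 ?subr_ge0 // mulr_ge0 // ltW.
Qed.

Lemma unif_out (Y : Omega -> R) : uniform_sym P Y eps ->
  P (Y @^-1` ~` Ieps) = 0%E.
Proof.
move=> hu; rewrite hu; last by apply: measurableC; exact: mIeps.
by rewrite -/(Ieps) setICl measure0 mul0e.
Qed.

End Prob.

Section Core.
Context (R : realType) (d : measure_display) (Omega : measurableType d)
  (P : probability Omega R) (V : finType) (Ed : {set V * V})
  (X : V * V -> Omega -> R) (eps : R).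
Hypothesis eps0 : 0 < eps.
Hypothesis mX : forall e, measurable_fun setT (X e).
Hypothesis indep : mutually_independent P Ed X.
Hypothesis unif : forall e, e \in Ed -> uniform_sym P (X e) eps.

Lemma mpre e (B : set R) : measurable B -> measurable (X e @^-1` B).
Proof. by move=> mB; rewrite -(setTI (_ @^-1` _)); apply: mX. Qed.

Variables (Bs : {set V * V}) (e : V * V) (c : V * V -> R) (k : R).
Hypotheses (BsE : Bs \subset Ed) (eE : e \in Ed) (eNB : e \notin Bs).

Let K := \sum_(b in Bs) `|c b|.
Let K0 : 0 <= K. Proof. by apply: sumr_ge0 => b _. Qed.

Section Fixm.
Variable m : nat.
Let dl := 2 * eps / m.+1%:R.
Let dl0 : 0 < dl. Proof. by rewrite divr_gt0 // mulr_gt0. Qed.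
Let a (l : nat) := - eps + l%:R * dl.
Let tk (kp : {ffun V * V -> 'I_m.+1}) := \sum_(b in Bs) c b * a (kp b) + k.
Let Bset (kp : {ffun V * V -> 'I_m.+1}) (j : V * V) : set R :=
  if j == e then [set` `[tk kp - K * dl, tk kp + K * dl]]
  else if j \in Bs then [set` `[a (kp j), a (kp j) + dl]] else setT.
Let mBset kp j : measurable (Bset kp j).
Proof. by rewrite /Bset; case: ifP => _; [|case: ifP => _]; try exact: measurable_itv. Qed.
Let Rk kp := \bigcap_(j in [set j | j \in Ed]) (X j @^-1` Bset kp j).
Let mRk kp : measurable (Rk kp).
Proof.
apply: fin_bigcap_measurable; first exact: finite_finset.
by move=> j _; apply: mpre.
Qed.

Let Fam := pfamily (ord0 : 'I_m.+1) (fun j => j \in Bs) (fun _ => predT).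

Definition Sm := (\big[setU/set0]_(kp | kp \in Fam) Rk kp) `|`
   (\big[setU/set0]_(j | j \in Bs) (X j @^-1` ~` @Ieps R eps)).

Lemma mSm : measurable Sm.
Proof.
apply: measurableU; apply: bigsetU_measurable => i _; first exact: mRk.
apply: mpre; apply: measurableC; exact: mIeps.
Qed.

Let g (j : V * V) : R := if j == e then 2 * K / m.+1%:R
  else if j \in Bs then (m.+1%:R)^-1 else 1.

Let dl_eps : dl / (2 * eps) = (m.+1%:R)^-1.
Proof. rewrite /dl mulrAC divff ?mul1r //; by rewrite gt_eqF // mulr_gt0. Qed.

Lemma Rk_bound kp : (P (Rk kp) <= (2 * K / m.+1%:R * \prod_(j in Bs) (m.+1%:R)^-1)%:E)%E.
Proof.
rewrite /Rk indep; last by move=> j; apply: mBset.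
rewrite (eq_bigr (fun j => (fine (P (X j @^-1` Bset kp j)))%:E)); last first.
  by move=> j _; apply: P_fin; apply: mpre.
rewrite prodEFin lee_fin.
apply: le_trans (_ : \prod_(j in Ed) g j <= _).
  apply: ler_prod => j jE.
  have /andP[-> _] := @P_fin_le _ _ _ P _ (@mpre j _ (mBset kp j)); rewrite /=.
  rewrite -lee_fin -(@P_fin _ _ _ P); last exact: mpre.
  rewrite /g /Bset; case: ifP => [/eqP je|jne].
    apply: le_trans (unif_bound eps0 _ _) _.
    - by apply: unif.
    - by have := mulr_ge0 K0 (ltW dl0); lra.
    have -> : forall t, t + K * dl - (t - K * dl) = 2 * K * dl by move=> t; ring.
    by rewrite lee_fin -dl_eps !mulrA.
  case: ifP => jB.
    apply: le_trans (unif_bound eps0 _ _) _.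
    - by apply: unif.
    - by rewrite lerDl ltW.
    by rewrite lee_fin addrAC subrr add0r dl_eps.
  rewrite preimage_setT; exact: probability_le1.
rewrite (bigD1 e) //= /g eqxx; apply: ler_wpM2l.
  by rewrite divr_ge0 // mulr_ge0.
under eq_bigr => j /andP[_ /negbTE ->] do [].
rewrite -big_mkcondr /=.
rewrite (eq_bigl (fun j => j \in Bs)) // => j.
case jB: (j \in Bs); rewrite ?andbF ?andbT //.
rewrite (fintype.subsetP BsE _ jB) /=; apply/eqP => je; move: eNB; by rewrite -je jB.
Qed.

Lemma Sm_bound : (P Sm <= (2 * K / m.+1%:R)%:E)%E.
Proof.
have mO : forall j, measurable (X j @^-1` ~` @Ieps R eps).
  by move=> j; apply: mpre; apply: measurableC; exact: mIeps.
have [m1 h1] := P_bigU P (fun kp => kp \in Fam) mRk.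
have [m2 h2] := P_bigU P (fun j => j \in Bs) mO.
apply: le_trans (measureU2 P m1 m2) _.
have -> : (2 * K / m.+1%:R)%:E = ((2 * K / m.+1%:R)%:E + 0)%E by rewrite adde0.
apply: leeD.
  apply: le_trans h1 _.
  apply: le_trans (_ : (\sum_(kp | kp \in Fam)
      (2 * K / m.+1%:R * \prod_(j in Bs) (m.+1%:R)^-1)%:E <= _)%E).
    by apply: lee_sum => kp _; apply: Rk_bound.
  rewrite sumEFin lee_fin -mulr_sumr.
  have <- := big_distr_big_dep (ord0 : 'I_m.+1) (fun j => j \in Bs) (fun _ => predT)
     (fun _ _ => (m.+1%:R : R)^-1).
  rewrite big1 ?mulr1 // => j _.
  by rewrite sumr_const card_ord -[(m.+1%:R)^-1 *+ m.+1]mulr_natl mulfV // pnatr_eq0.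
apply: le_trans h2 _.
rewrite big1 // => j jB; apply: unif_out; apply: unif.
exact: (fintype.subsetP BsE).
Qed.

Lemma cover : [set w | X e w = \sum_(b in Bs) c b * X b w + k] `<=` Sm.
Proof.
move=> w /= hw.
case: (pselect (exists2 j, j \in Bs & ~ @Ieps R eps (X j w))) => [[j jB hj]|hin].
  by right; apply: (mem_bigU (Pr := fun j => j \in Bs) (i := j)).
left.
have hin' : forall j, j \in Bs -> - eps < X j w < eps.
  move=> j jB; have [//|h] := pselect (@Ieps R eps (X j w)).
  by exfalso; apply: hin; exists j.
have dlm : m.+1%:R * dl = 2 * eps.
  by rewrite /dl mulrCA divff ?mulr1 // pnatr_eq0.
pose q j := (X j w + eps) / dl.
have hq : forall j, q j * dl = X j w + eps.
  by move=> j; rewrite /q divfK // gt_eqF.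
pose kp : {ffun V * V -> 'I_m.+1} :=
  [ffun j => if j \in Bs then inord (Num.truncn (q j)) else ord0].
have box : forall j, j \in Bs -> a (kp j) <= X j w <= a (kp j) + dl.
  move=> j jB; have /andP[h1 h2] := hin' j jB.
  have q0 : 0 <= q j by rewrite /q divr_ge0 ?(ltW dl0) //; lra.
  have qm : q j < m.+1%:R.
    by rewrite -(ltr_pM2r dl0) hq dlm; lra.
  have tm : (Num.truncn (q j) < m.+1)%N by rewrite truncn_lt_nat.
  rewrite /kp ffunE jB inordK //.
  have /andP[t1 t2] := truncn_itv q0.
  rewrite /a; move: t2; rewrite -natr1 => t2.
  have u1 : (Num.truncn (q j))%:R * dl <= q j * dl by rewrite ler_wpM2r // ltW.
  have u2 : q j * dl <= ((Num.truncn (q j))%:R + 1) * dl by rewrite ler_wpM2r // ltW.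
  rewrite hq in u1 u2; apply/andP; split; first lra.
  move: u2; rewrite mulrDl mul1r; lra.
have kpF : kp \in Fam.
  apply/familyP => j; rewrite /kp ffunE /=.
  have -> : (j \in in_mem^~ (mem Bs)) = (j \in Bs) by [].
  by case: ifP => jB; rewrite ?inE.
apply: (mem_bigU (Pr := fun kp => kp \in Fam) (i := kp)) => //.
move=> j /= jE.
rewrite /Bset; case: ifP => [/eqP ->|jne].
  rewrite /= in_itv /=.
  have hdiff : X e w - tk kp = \sum_(b in Bs) c b * (X b w - a (kp b)).
    rewrite hw /tk; under [RHS]eq_bigr do rewrite mulrBr.
    rewrite sumrB; lra.
  have hb : `|X e w - tk kp| <= K * dl.
    rewrite hdiff; apply: le_trans (ler_norm_sum _ _ _) _.
    rewrite /K mulr_suml; apply: ler_sum => b bB.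
    rewrite normrM; apply: ler_wpM2l => //.
    have /andP[b1 b2] := box b bB.
    rewrite ler_norml; apply/andP; split; have := dl0; lra.
  move: hb; rewrite ler_norml => /andP[b1 b2]; apply/andP; split; lra.
case: ifP => jB //=.
by rewrite in_itv /=; apply: box.
Qed.

End Fixm.

Lemma core_negl : P.-negligible [set w | X e w = \sum_(b in Bs) c b * X b w + k].
Proof.
have mZ : measurable (\bigcap_m Sm m) by apply: bigcapT_measurable => m; exact: mSm.
exists (\bigcap_m Sm m); split => //; last by move=> w hw m _; exact: cover.
have hZ : forall m, (P (\bigcap_m Sm m) <= (2 * K / m.+1%:R)%:E)%E.
  move=> m; apply: le_trans (Sm_bound m).
  apply: le_measure; rewrite ?inE //; first exact: mSm.
  by move=> w hw; apply: hw.
set z := fine (P (\bigcap_m Sm m)).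
have ez : P (\bigcap_m Sm m) = z%:E by apply: P_fin.
rewrite ez; congr (_%:E).
have zge0 : 0 <= z by have /andP[h _] := P_fin_le P mZ; exact: h.
apply/le_anti/andP; split => //.
have hz : forall m, z <= 2 * K / m.+1%:R.
  by move=> m; rewrite -lee_fin -ez.
rewrite leNgt; apply/negP => z0.
have := hz (Num.truncn (2 * K / z)).
have := truncnS_gt (2 * K / z).
rewrite ltr_pdivrMr // ler_pdivlMr ?ltr0n //.
move=> h1 h2; suff : 2 * K < 2 * K by rewrite ltxx.
nra.
Qed.

End Core.

Lemma part2 (R : realType) (V : finType) (Vmax : {set V})
  (Ed : {set V * V}) (w lam : V * V -> R) (eps : R) :
  0 < eps ->
  (forall (d : measure_display) (Omega : measurableType d)
          (P : probability Omega R) (X : V * V -> Omega -> R),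
     (forall e, measurable_fun setT (X e)) ->
     mutually_independent P Ed X ->
     (forall e, e \in Ed -> uniform_sym P (X e) eps) ->
     {ae P, forall omega, sharp Vmax Ed (fun e => w e + X e omega) lam}).
Proof.
move=> eps0 d Omega P X mX indep unif.
pose Wo (o : Omega) := fun e => w e + X e o.
pose Bad (p : {set V * V} * (V * V)) : set Omega := [set o |
  is_basis Ed (Wo o) lam p.1 /\ p.2 \in Ed /\ p.2 \notin p.1 /\
  exists x, solves_eqs (Wo o) lam p.1 x /\ x p.2.1 = Wo o p.2 + lam p.2 * x p.2.2].
have negBad : forall p, P.-negligible (Bad p).
  move=> [B e].
  have [ex|none] := pselect (exists o, Bad (B, e) o); last first.
    apply: (negligibleS (A := set0)); last exact: negligible_set0.
    by move=> o ho; apply: none; exists o.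
  case: ex => o0 [hb [eE [eNB _]]]; move: hb => /= [BE [cB [hx0' uniq]]].
  case: hx0' => x0 hx0.
  have KT : forall k : V -> R, (forall b, b \in B -> psi lam b k = 0) -> forall v, k v = 0.
    move=> k hk v.
    have h := uniq (fun u => x0 u + k u) x0 _ hx0 v.
    have : x0 v + k v = x0 v by apply: h => b bB; rewrite hx0 //; have := hk b bB; rewrite /psi; lra.
    lra.
  have [c hc] := lin_factor e KT.
  apply: (negligibleS (A := [set o | X e o = \sum_(b in B) c b * X b o +
                                          (\sum_(b in B) c b * w b - w e)])).
    move=> o [_ [_ [_ [x [hx he]]]]] /=.
    have := hc x; rewrite /psi he /Wo.
    have -> : \sum_(b in B) c b * (x b.1 - lam b * x b.2) =
              \sum_(b in B) c b * (w b + X b o).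
      by apply: eq_bigr => b bB; rewrite hx //; congr (_ * _); rewrite /Wo; lra.
    rewrite /= => h.
    have hs : \sum_(b in B) c b * (w b + X b o) =
       \sum_(b in B) c b * w b + \sum_(b in B) c b * X b o.
      by rewrite -big_split; apply: eq_bigr => b _; rewrite mulrDr.
    lra.
  exact: (@core_negl R d Omega P V Ed X eps eps0 mX indep unif B e c _ BE eE eNB).
change (P.-negligible (~` [set o | sharp Vmax Ed (Wo o) lam])).
apply: (negligibleS (A := \big[setU/set0]_(p | predT p) Bad p)).
  move=> o /= ns.
  have [x [hbv hcard]] : exists x, basis_valuation Vmax Ed (Wo o) lam x /\
      #|[set e in Ed | x e.1 == Wo o e + lam e * x e.2]| <> #|V|.
    apply: contrapT => hn; apply: ns => x hx.
    apply: contrapT => hc; apply: hn; by exists x.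
  move: hbv => [B [hB [hs hH]]]; have [BE [cB _]] := hB.
  set S := [set e in Ed | _] in hcard.
  have BS : B \subset S.
    apply/fintype.subsetP => b bB; rewrite inE (fintype.subsetP BE _ bB) /=.
    by apply/eqP; apply: hs.
  have /subsetPn [e eS eNB] : ~~ (S \subset B).
    apply/negP => SB; apply: hcard; rewrite -cB.
    by apply/eqP; rewrite eqn_leq !subset_leq_card.
  apply: (mem_bigU (Pr := predT) (i := (B, e))) => //=.
  move: eS; rewrite inE => /andP[eE /eqP he].
  rewrite /Bad /=; split; first exact: hB.
  split => //; split => //; by exists x.
elim/big_ind: _ => //.
- exact: negligible_set0.
- by move=> A B hA hB; apply: negligibleU.
Qed.

Theorem corollary4p7 (R : realType) (V : finType) (Vmax : {set V})
  (Ed : {set V * V}) (w lam : V * V -> R) (eps : R) :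
  valid_game Ed lam ->
  (exists s, joint_strategy Ed s /\ ~ co_optimal Vmax Ed w lam s) ->
  0 < eps ->
  eps <= (1 - lambda_star Ed lam) / 3 * gap Vmax Ed w lam ->
  (forall delta : V * V -> R,
     (forall e, e \in Ed -> - eps < delta e < eps) ->
     forall s, co_optimal Vmax Ed (fun e => w e + delta e) lam s ->
               co_optimal Vmax Ed w lam s) /\
  (forall (d : measure_display) (Omega : measurableType d)
          (P : probability Omega R) (X : V * V -> Omega -> R),
     (forall e, measurable_fun setT (X e)) ->
     mutually_independent P Ed X ->
     (forall e, e \in Ed -> uniform_sym P (X e) eps) ->
     {ae P, forall omega, sharp Vmax Ed (fun e => w e + X e omega) lam}).
Proof.
move=> hv hs eps0 heps; split.
  exact: (part1 hv hs eps0 heps).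
exact: (part2 Vmax w lam eps0).
Qed.
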